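(* There is an absolute constant $C$ such that if $E\subset\mathbb{Z}^2$ is sparse with respect to a sequence $(\alpha_k,\beta_k)_{k\ge1}$ (integers, $\alpha_k\le\beta_k$), then the Besicovitch density of $E$ is at most $C\sum_k(\alpha_k/\beta_k)^2$.
   Context: Distances on $\mathbb{Z}^2$ are $\ell_\infty$; the diameter of a set is the maximal distance between its elements; the $\beta$-neighborhood of $X$ is the set of points at distance at most $\beta$ from some point of $X$. For $E\subset\mathbb{Z}^2$ and integers $\beta\ge\alpha>0$, a nonempty $X\subset E$ is an $(\alpha,\beta)$-island in $E$ if its diameter is at most $\alpha$ and the $\beta$-neighborhood of $X$ contains no point of $E\setminus X$. The cleaning process sets $E_0=E$ and obtains $E_i$ from $E_{i-1}$ by removing all $(\alpha_i,\beta_i)$-islands of $E_{i-1}$ (rank $i$ islands); a point is affected at step $i$ if it lies in the $\beta_i$-neighborhood of some rank $i$ island. $E$ is sparse if every point of $E$ is removed at some step and every point of $\mathbb{Z}^2$ is affected at only finitely many steps. The Besicovitch density of $E$ is $\limsup_{n\to\infty}$ of the fraction of points of $E$ in the square of side $n$ centered at a fixed point (independent of the point). *)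

(* Defs.v *)
From Stdlib Require Import Reals ZArith List Lia.
Import ListNotations.
Open Scope R_scope.

Definition point : Type := (Z * Z)%type.

Definition dist (p q : point) : Z :=
  Z.max (Z.abs (fst p - fst q)) (Z.abs (snd p - snd q)).

Definition island (a b : Z) (F X : point -> Prop) : Prop :=
  (exists x, X x) /\
  (forall x, X x -> F x) /\
  (forall x y, X x -> X y -> (dist x y <= a)%Z) /\
  (forall x y, X x -> F y -> (dist y x <= b)%Z -> X y).

Fixpoint cleaned (alpha beta : nat -> Z) (E : point -> Prop) (i : nat)
  : point -> Prop :=
  match i with
  | O => E
  | S j => fun p => cleaned alpha beta E j p /\
      ~ (exists X, island (alpha (S j)) (beta (S j)) (cleaned alpha beta E j) X
                   /\ X p)
  end.

Definition affected (alpha beta : nat -> Z) (E : point -> Prop) (i : nat)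
  (p : point) : Prop :=
  exists X, island (alpha i) (beta i) (cleaned alpha beta E (i - 1)) X /\
            exists x, X x /\ (dist p x <= beta i)%Z.

Definition sparse (alpha beta : nat -> Z) (E : point -> Prop) : Prop :=
  (forall p, E p -> exists i, (1 <= i)%nat /\
      cleaned alpha beta E (i - 1) p /\ ~ cleaned alpha beta E i p) /\
  (forall p, exists N, forall i, (1 <= i)%nat -> affected alpha beta E i p ->
      (i <= N)%nat).

Definition Zrange (n : nat) : list Z :=
  map (fun k => (Z.of_nat k - Z.of_nat n)%Z) (seq 0 (2 * n + 1)).

Definition count_in_square (E : point -> bool) (n : nat) : nat :=
  length (filter E (list_prod (Zrange n) (Zrange n))).

Definition density_ratio (E : point -> bool) (n : nat) : R :=
  INR (count_in_square E n) / INR ((2 * n + 1) * (2 * n + 1)).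

(* Besicovitch density of E is at most L, i.e.
   limsup_n density_ratio E n <= L. *)
Definition besicovitch_density_le (E : point -> bool) (L : R) : Prop :=
  forall eps, 0 < eps -> exists N : nat, forall n : nat, (N <= n)%nat ->
    density_ratio E n <= L + eps.

(* Main.v *)
From Pilot Require Import Defs.
From Stdlib Require Import Reals ZArith List Lia Lra ClassicalEpsilon Classical.
Import ListNotations.
Open Scope Z_scope.
Local Notation dist := Pilot.Defs.dist.

Lemma NoDup_prod {A B} (l : list A) (l' : list B) :
  NoDup l -> NoDup l' -> NoDup (list_prod l l').
Proof.
  induction 1 as [|a l Ha Hl IH]; intros Hl'; simpl; [constructor|].
  apply NoDup_app.
  - apply NoDup_map_NoDup_ForallPairs; auto.
    intros x y _ _ E; inversion E; auto.
  - auto.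
  - intros [x y] H1 H2. apply in_map_iff in H1. destruct H1 as [z [Ez _]].
    inversion Ez; subst. apply in_prod_iff in H2. tauto.
Qed.

Definition range (c r : Z) : list Z :=
  map (fun k => c - r + Z.of_nat k) (seq 0 (Z.to_nat (2*r+1))).

Lemma range_in c r z : 0 <= r -> c - r <= z <= c + r -> In z (range c r).
Proof.
  intros Hr Hz. unfold range. apply in_map_iff.
  exists (Z.to_nat (z - (c - r))). split.
  - rewrite Z2Nat.id; lia.
  - apply in_seq. lia.
Qed.

Lemma range_len c r : length (range c r) = Z.to_nat (2*r+1).
Proof. unfold range. rewrite length_map, length_seq. reflexivity. Qed.

Lemma dist_sym p q : dist p q = dist q p.
Proof. unfold dist. f_equal; rewrite <- Z.abs_opp; f_equal; ring. Qed.

Definition blk (b : Z) (p : point) : point := (fst p / b, snd p / b).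
Definition peqb (p q : point) : bool := Z.eqb (fst p) (fst q) && Z.eqb (snd p) (snd q).

Lemma peqb_true p q : peqb p q = true -> p = q.
Proof.
  destruct p, q; unfold peqb; simpl. rewrite Bool.andb_true_iff, !Z.eqb_eq.
  intros [-> ->]; reflexivity.
Qed.

Lemma peqb_refl p : peqb p p = true.
Proof. unfold peqb. rewrite !Z.eqb_refl. reflexivity. Qed.

Lemma len_filter_cons {A} (g : A -> bool) x l :
  length (filter g (x :: l)) = ((if g x then 1 else 0) + length (filter g l))%nat.
Proof. simpl. destruct (g x); reflexivity. Qed.

Lemma list_sum_map_add {A} (g h : A -> nat) l :
  list_sum (map (fun c => g c + h c)%nat l) = (list_sum (map g l) + list_sum (map h l))%nat.
Proof. induction l; simpl; lia. Qed.

Lemma list_sum_ind1 y (Cs : list point) : In y Cs ->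
  (1 <= list_sum (map (fun c => if peqb y c then 1 else 0) Cs))%nat.
Proof.
  induction Cs as [|c Cs IH]; simpl; [tauto|].
  intros [<-|H]; [rewrite peqb_refl; lia|]. specialize (IH H); lia.
Qed.

Lemma sum_split (l : list point) (f : point -> point) (Cs : list point) :
  (forall x, In x l -> In (f x) Cs) ->
  (length l <= list_sum (map (fun c => length (filter (fun x => peqb (f x) c) l)) Cs))%nat.
Proof.
  induction l as [|x l IH]; intros H; simpl; [lia|].
  rewrite (map_ext _ (fun c => (if peqb (f x) c then 1 else 0) + length (filter (fun y => peqb (f y) c) l))%nat); [|intros c; apply (len_filter_cons (fun y => peqb (f y) c))].
  rewrite list_sum_map_add.
  pose proof (list_sum_ind1 (f x) Cs (H x (or_introl eq_refl))).
  specialize (IH (fun y Hy => H y (or_intror Hy))). lia.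
Qed.

Lemma sum_bound {A} (g : A -> nat) M Cs :
  (forall c, In c Cs -> (g c <= M)%nat) -> (list_sum (map g Cs) <= length Cs * M)%nat.
Proof.
  induction Cs as [|c Cs IH]; simpl; intros H; [lia|].
  specialize (H c (or_introl eq_refl)) as H1.
  specialize (IH (fun d Hd => H d (or_intror Hd))). lia.
Qed.

Lemma same_div x y b : 0 < b -> x / b = y / b -> Z.abs (x - y) <= b - 1.
Proof.
  intros Hb E. pose proof (Z.div_mod x b ltac:(lia)). pose proof (Z.div_mod y b ltac:(lia)).
  pose proof (Z.mod_pos_bound x b Hb). pose proof (Z.mod_pos_bound y b Hb).
  rewrite E in H. lia.
Qed.

Lemma block_bound (L : list point) a b c :
  0 < a -> a <= b -> NoDup L ->
  (forall x, In x L -> blk b x = c) ->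
  (forall p q, In p L -> In q L -> dist p q <= b -> dist p q <= a) ->
  (length L <= Z.to_nat (2*a+1) * Z.to_nat (2*a+1))%nat.
Proof.
  intros Ha Hab Hnd Hblk Hcl.
  destruct L as [|p0 L']; [simpl; lia|].
  set (L := p0 :: L') in *.
  replace (Z.to_nat (2*a+1) * Z.to_nat (2*a+1))%nat with (length (list_prod (range (fst p0) a) (range (snd p0) a)))
    by (rewrite length_prod, !range_len; reflexivity).
  apply NoDup_incl_length; auto.
  intros [y1 y2] Hy.
  assert (Hd : dist p0 (y1, y2) <= a).
  { apply Hcl; [left; reflexivity|auto|].
    pose proof (Hblk p0 (or_introl eq_refl)) as E1. pose proof (Hblk _ Hy) as E2.
    rewrite <- E2 in E1. unfold blk in E1. injection E1 as E1a E1b.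
    apply same_div in E1a; [|lia]. apply same_div in E1b; [|lia].
    unfold dist. simpl in *. lia. }
  unfold dist in Hd; simpl in Hd. apply Z.max_lub_iff in Hd.
  apply in_prod_iff; split; apply range_in; lia.
Qed.

Lemma div_range x n b : 0 < b -> Z.abs x <= n ->
  -(n / b + 1) <= x / b <= n / b + 1.
Proof.
  intros Hb Hx. pose proof (Z.div_mod x b ltac:(lia)). pose proof (Z.div_mod n b ltac:(lia)).
  pose proof (Z.mod_pos_bound x b Hb). pose proof (Z.mod_pos_bound n b Hb).
  set (d := x / b) in *. set (q := n / b) in *.
  split.
  - destruct (Z_le_gt_dec (-(q+1)) d); auto.
    assert (b * d <= b * (-q-2)) by (apply Z.mul_le_mono_nonneg_l; lia). lia.
  - destruct (Z_le_gt_dec d (q+1)); auto.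
    assert (b * (q + 2) <= b * d) by (apply Z.mul_le_mono_nonneg_l; lia). lia.
Qed.

Lemma comb (Q : list point) (n a b : Z) :
  NoDup Q -> 0 < a -> a <= b -> b <= n ->
  (forall p, In p Q -> Z.abs (fst p) <= n /\ Z.abs (snd p) <= n) ->
  (forall p q, In p Q -> In q Q -> dist p q <= b -> dist p q <= a) ->
  Z.of_nat (length Q) * b^2 <= 225 * a^2 * (2*n+1)^2.
Proof.
  intros Hnd Ha Hab Hbn Hsq Hcl.
  set (q := n / b).
  set (Rg := range 0 (q+1)).
  assert (Hq1 : 0 < q) by (apply Z.div_str_pos; lia).
  assert (Hqb : b * q <= n) by (apply Z.mul_div_le; lia).
  assert (Hlen : (length Q <= length (list_prod Rg Rg) * (Z.to_nat (2*a+1) * Z.to_nat (2*a+1)))%nat).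
  { eapply Nat.le_trans; [apply (sum_split Q (blk b) (list_prod Rg Rg))|].
    - intros x Hx. destruct (Hsq x Hx) as [H1 H2]. unfold blk.
      apply in_prod_iff; split; apply range_in; try lia;
        apply div_range; lia.
    - apply sum_bound. intros c _. apply block_bound with b c; auto.
      + apply NoDup_filter; auto.
      + intros x Hx. apply filter_In in Hx. apply peqb_true. tauto.
      + intros p r Hp Hr. apply filter_In in Hp, Hr. apply Hcl; tauto. }
  rewrite length_prod in Hlen. unfold Rg in Hlen. rewrite range_len in Hlen.
  apply Nat2Z.inj_le in Hlen. rewrite !Nat2Z.inj_mul, !Z2Nat.id in Hlen by lia.
  set (Lq := Z.of_nat (length Q)) in *.
  assert (0 <= Lq) by lia.
  assert (H3 : Lq <= (5*q)*(5*q)*((3*a)*(3*a))).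
  { eapply Z.le_trans; [apply Hlen|].
    apply Z.mul_le_mono_nonneg; try lia; apply Z.mul_le_mono_nonneg; lia. }
  assert (H4 : Lq * b^2 <= 225 * a^2 * (b*q)^2).
  { replace (b^2) with (b*b) by ring. replace ((b*q)^2) with ((b*q)*(b*q)) by ring.
    replace (a^2) with (a*a) by ring.
    assert (Lq * (b*b) <= (5*q)*(5*q)*((3*a)*(3*a)) * (b*b)) by (apply Z.mul_le_mono_nonneg_r; nia).
    nia. }
  eapply Z.le_trans; [apply H4|].
  apply Z.mul_le_mono_nonneg_l; [nia|].
  apply Z.pow_le_mono_l; nia.
Qed.

Open Scope R_scope.
Definition Db (P : point -> Prop) (p : point) : bool :=
  if excluded_middle_informative (P p) then true else false.

Lemma Db_true P p : Db P p = true <-> P p.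
Proof. unfold Db; destruct excluded_middle_informative; split; intros; auto; discriminate. Qed.

Fixpoint sumk (K : nat) (f : nat -> nat) : nat :=
  match K with O => O | S K' => (sumk K' f + f (S K'))%nat end.
Fixpoint rsumk (K : nat) (f : nat -> R) : R :=
  match K with O => 0 | S K' => rsumk K' f + f (S K') end.

Lemma sumk_add K f g : sumk K (fun k => f k + g k)%nat = (sumk K f + sumk K g)%nat.
Proof. induction K; simpl; lia. Qed.

Lemma sumk_ext K f g : (forall k, f k = g k) -> sumk K f = sumk K g.
Proof. intros H; induction K; simpl; auto. Qed.

Lemma sumk_ge1 K g k : (1 <= k <= K)%nat -> (1 <= g k)%nat -> (1 <= sumk K g)%nat.
Proof.
  induction K; simpl; intros Hk Hg; [lia|].
  destruct (Nat.eq_dec k (S K)); [subst; lia|]. specialize (IHK ltac:(lia) Hg). lia.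
Qed.

Lemma count_decomp (l : list point) (e : point -> bool) (D : nat -> point -> bool) K :
  (forall p, In p l -> e p = true -> exists k, (1 <= k <= K)%nat /\ D k p = true) ->
  (length (filter e l) <= sumk K (fun k => length (filter (D k) l)))%nat.
Proof.
  induction l as [|x l IH]; intros H; simpl.
  - induction K; simpl; lia.
  - rewrite (sumk_ext K _ (fun k => (if D k x then 1 else 0) + length (filter (D k) l))%nat)
      by (intros k; destruct (D k x); reflexivity).
    rewrite (sumk_add K (fun k => if D k x then 1 else 0)%nat (fun k => length (filter (D k) l))). specialize (IH (fun p Hp => H p (or_intror Hp))).
      destruct (e x) eqn:Ex; simpl; [|lia].
      destruct (H x (or_introl eq_refl) Ex) as [k [Hk Dk]].
      pose proof (sumk_ge1 K (fun k => if D k x then 1 else 0)%nat k Hk) as G.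
      simpl in G. rewrite Dk in G. specialize (G (le_n 1)). lia.
Qed.

Lemma exK (l : list point) (e : point -> bool) (D : nat -> point -> bool) :
  (forall p, In p l -> e p = true -> exists k, (1 <= k)%nat /\ D k p = true) ->
  exists K, forall p, In p l -> e p = true -> exists k, (1 <= k <= K)%nat /\ D k p = true.
Proof.
  induction l as [|x l IH]; intros H.
  - exists O. intros p [].
  - destruct (IH (fun p Hp => H p (or_intror Hp))) as [K HK].
    destruct (e x) eqn:Ex.
    + destruct (H x (or_introl eq_refl) Ex) as [k [Hk Dk]].
      exists (Nat.max K k). intros p [<-|Hp] Ep.
      * exists k; split; [lia|auto].
      * destruct (HK p Hp Ep) as [k' [? ?]]. exists k'; split; [lia|auto].
    + exists K. intros p [<-|Hp] Ep; [congruence|]. auto.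
Qed.

Lemma Zrange_in n z : In z (Zrange n) -> (Z.abs z <= Z.of_nat n)%Z.
Proof.
  unfold Zrange. intros H. apply in_map_iff in H. destruct H as [k [<- Hk]].
  apply in_seq in Hk. lia.
Qed.

Lemma Zrange_nodup n : NoDup (Zrange n).
Proof.
  unfold Zrange. apply NoDup_map_NoDup_ForallPairs; [|apply seq_NoDup].
  intros x y _ _ E. lia.
Qed.

Lemma beta_bound (beta : nat -> Z) (M : nat) :
  exists N : nat, forall k, (k <= M)%nat -> (beta k <= Z.of_nat N)%Z.
Proof.
  induction M as [|M [N HN]].
  - exists (Z.to_nat (beta O)). intros k Hk. replace k with O by lia. lia.
  - exists (Nat.max N (Z.to_nat (beta (S M)))). intros k Hk.
    destruct (Nat.eq_dec k (S M)); [subst; lia|].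
    specialize (HN k ltac:(lia)). lia.
Qed.

Section Main.
Variables (alpha beta : nat -> Z) (E : point -> bool).
Let EP := fun p => E p = true.
Let cl := cleaned alpha beta EP.
Definition removed_at (k : nat) (p : point) : Prop := cl (k - 1) p /\ ~ cl k p.

Lemma island_of j p : cl j p -> ~ cl (S j) p ->
  exists X, island (alpha (S j)) (beta (S j)) (cl j) X /\ X p.
Proof.
  intros H1 H2. apply NNPP. intros H3. apply H2. unfold cl; simpl. split; auto.
Qed.

Lemma removed_island k p : (1 <= k)%nat -> removed_at k p ->
  exists X, island (alpha k) (beta k) (cl (k-1)) X /\ X p.
Proof.
  intros Hk [H1 H2]. destruct k as [|j]; [lia|].
  replace (S j - 1)%nat with j in * by lia. apply island_of; auto.
Qed.

Lemma close_pts k p q : (1 <= k)%nat -> removed_at k p -> removed_at k q ->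
  (dist p q <= beta k)%Z -> (dist p q <= alpha k)%Z.
Proof.
  intros Hk Hp Hq Hd.
  destruct (removed_island k p Hk Hp) as [X [[_ [HXF [Hdiam Hnb]]] Xp]].
  destruct (removed_island k q Hk Hq) as [Y [[_ [HYF _]] Yq]].
  apply Hdiam; auto. apply (Hnb p q Xp (HYF q Yq)). rewrite dist_sym. auto.
Qed.
End Main.

Definition Sq (n : nat) := list_prod (Zrange n) (Zrange n).

Lemma rank_bound alpha beta E (N0 N n k : nat) :
  (forall k, (1 <= k)%nat -> (0 < alpha k)%Z /\ (alpha k <= beta k)%Z) ->
  (forall i, (1 <= i)%nat -> affected alpha beta (fun p => E p = true) i (0%Z,0%Z) -> (i <= N0)%nat) ->
  (forall k, (k <= N0)%nat -> (beta k <= Z.of_nat N)%Z) -> (N <= n)%nat -> (1 <= k)%nat ->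
  (Z.of_nat (length (filter (Db (removed_at alpha beta E k)) (Sq n))) * (beta k)^2
     <= 225 * (alpha k)^2 * (2 * Z.of_nat n + 1)^2)%Z.
Proof.
  intros Hab Haff HN HNn Hk.
  destruct (Hab k Hk) as [Ha Hb].
  destruct (filter (Db (removed_at alpha beta E k)) (Sq n)) as [|p0 Q'] eqn:HQ.
  { change (Z.of_nat (length (@nil point))) with 0%Z. rewrite !Z.pow_2_r. nia. }
  assert (HinQ : forall p, In p (p0 :: Q') -> removed_at alpha beta E k p /\
            (Z.abs (fst p) <= Z.of_nat n)%Z /\ (Z.abs (snd p) <= Z.of_nat n)%Z).
  { intros p Hp. rewrite <- HQ in Hp. apply filter_In in Hp. destruct Hp as [Hp Hd].
    apply Db_true in Hd. destruct p as [x y]. unfold Sq in Hp. apply in_prod_iff in Hp.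
    destruct Hp as [Hx Hy]. apply Zrange_in in Hx, Hy. simpl. auto. }
  assert (Hbn : (beta k <= Z.of_nat n)%Z).
  { destruct (Z_le_gt_dec (beta k) (Z.of_nat n)) as [|Hgt]; auto. exfalso.
    destruct (HinQ p0 (or_introl eq_refl)) as [Hr [H1 H2]].
    destruct (removed_island alpha beta E k p0 Hk Hr) as [X [HX Xp]].
    assert (k <= N0)%nat.
    { apply Haff; auto. exists X; split; auto. exists p0; split; auto.
      unfold dist; simpl. apply Z.max_lub; lia. }
    specialize (HN k H). lia. }
  apply comb; auto; try lia.
  - rewrite <- HQ. apply NoDup_filter. apply NoDup_prod; apply Zrange_nodup.
  - intros p Hp; apply HinQ; auto.
  - intros p q Hp Hq. apply (close_pts alpha beta E); auto; apply HinQ; auto.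
Qed.

Lemma rsumk_le K (f : nat -> nat) (h : nat -> R) :
  (forall k, (1 <= k <= K)%nat -> INR (f k) <= h k) -> INR (sumk K f) <= rsumk K h.
Proof.
  induction K; simpl; intros H; [lra|]. rewrite plus_INR.
  assert (INR (sumk K f) <= rsumk K h) by (apply IHK; intros; apply H; lia).
  specialize (H (S K) ltac:(lia)). lra.
Qed.

Lemma rsumk_scale K c h : rsumk K (fun k => c * h k) = c * rsumk K h.
Proof. induction K; simpl; [ring|rewrite IHK; ring]. Qed.

Lemma rsumk_sum K h : rsumk (S K) h = sum_f_R0 (fun j => h (S j)) K.
Proof. induction K; simpl in *; [ring|rewrite <- IHK; ring]. Qed.

Lemma partial_le (t : nat -> R) Sm :
  (forall j, 0 <= t j) -> infinite_sum t Sm -> forall K, sum_f_R0 t K <= Sm.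
Proof.
  intros Ht HS K. apply growing_ineq; [|exact HS].
  intros m. simpl. specialize (Ht (S m)). lra.
Qed.

Lemma conv (L : nat) (a b c : Z) :
  (Z.of_nat L * b^2 <= 225 * a^2 * c)%Z -> (0 < b)%Z ->
  INR L <= 225 * IZR c * (IZR a / IZR b)^2.
Proof.
  intros H Hb. rewrite !Z.pow_2_r in H. apply IZR_le in H. rewrite !mult_IZR in H.
  rewrite INR_IZR_INZ. apply IZR_lt in Hb.
  set (l := IZR (Z.of_nat L)) in *. set (a' := IZR a) in *. set (b' := IZR b) in *.
  replace (225 * IZR c * (a' / b') ^ 2) with ((225 * a' * a' * IZR c) / (b' * b')) by (field; lra).
  apply (Rmult_le_reg_r (b' * b')); [nra|].
  unfold Rdiv. rewrite Rmult_assoc, Rinv_l by nra. lra.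
Qed.

Theorem lemma2 :
  exists C : R,
    forall (alpha beta : nat -> Z) (E : point -> bool) (Ssum : R),
      (forall k : nat, (1 <= k)%nat ->
         (0 < alpha k)%Z /\ (alpha k <= beta k)%Z) ->
      sparse alpha beta (fun p => E p = true) ->
      infinite_sum (fun k : nat => (IZR (alpha (S k)) / IZR (beta (S k))) ^ 2) Ssum ->
      besicovitch_density_le E (C * Ssum).
Proof.
  exists 225. intros alpha beta E Ssum Hab [Hrem Haff] Hsum eps Heps.
  destruct (Haff (0%Z, 0%Z)) as [N0 HN0].
  destruct (beta_bound beta N0) as [N HN].
  exists N. intros n Hn.
  set (t := fun k => (IZR (alpha k) / IZR (beta k))^2).
  assert (Ht : forall j, 0 <= t j) by (intros j; apply pow2_ge_0).
  assert (HtS : forall K, rsumk K t <= Ssum).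
  { intros [|K]; simpl.
    - pose proof (partial_le (fun j => t (S j)) Ssum (fun j => Ht (S j)) Hsum 0). simpl in H.
      specialize (Ht 1%nat). lra.
    - pose proof (partial_le (fun j => t (S j)) Ssum (fun j => Ht (S j)) Hsum K) as H.
      rewrite <- rsumk_sum in H. exact H. }
  destruct (exK (Sq n) E (fun k => Db (removed_at alpha beta E k))) as [K HK].
  { intros p _ Ep. destruct (Hrem p Ep) as [i [Hi [H1 H2]]].
    exists i; split; auto. apply Db_true. split; auto. }
  pose proof (count_decomp (Sq n) E (fun k => Db (removed_at alpha beta E k)) K HK) as Hc.
  set (c := INR ((2 * n + 1) * (2 * n + 1))).
  assert (Hcz : c = IZR ((2 * Z.of_nat n + 1)^2)).
  { unfold c. rewrite INR_IZR_INZ. f_equal. rewrite Z.pow_2_r. lia. }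
  assert (Hcpos : 0 < c) by (unfold c; apply lt_0_INR; lia).
  assert (Hle : INR (count_in_square E n) <= 225 * c * Ssum).
  { unfold count_in_square. fold (Sq n).
    eapply Rle_trans; [apply le_INR, Hc|].
    eapply Rle_trans; [apply (rsumk_le K _ (fun k => (225 * c) * t k))|].
    - intros k Hk. rewrite Hcz. unfold t. simpl.
      apply conv; [|destruct (Hab k ltac:(lia)); lia].
      apply (rank_bound alpha beta E N0 N n k); auto; lia.
    - rewrite rsumk_scale. specialize (HtS K). nra. }
  unfold density_ratio. fold c.
  apply (Rmult_le_reg_r c); auto.
  unfold Rdiv. rewrite Rmult_assoc, Rinv_l by lra.
  assert (0 <= Ssum) by (specialize (HtS O); simpl in HtS; lra).
  nra.
Qed.
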